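(* Consider the class of three-valued logics (as defined in the context) that are paraconsistent and have properties (a) and (b). There are exactly 32 logics in this class whose logical equivalence relation $\equiv$ satisfies, for all formulas $A,B$, all of the following: (1) $A\wedge\bot \equiv \bot$; (2) $A\vee\top\equiv\top$; (3) $A\wedge\top\equiv A$; (4) $A\vee\bot\equiv A$; (5) $A\wedge A\equiv A$; (6) $A\vee A\equiv A$; (7) $A\wedge B\equiv B\wedge A$; (8) $A\vee B\equiv B\vee A$.
   Context: Formulas are built from a countably infinite set of propositional variables, the constant $\bot$, the unary connective $\neg$ and the binary connectives $\wedge,\vee,\to$; $\top$ abbreviates $\neg\bot$. Let $V=\{t,f,b\}$. A three-valued logic is specified by truth functions $\neg^M:V\to V$ and $\wedge^M,\vee^M,\to^M:V^2\to V$ that agree with the classical truth functions of negation, conjunction, disjunction and material implication on $\{t,f\}$, with $\bot$ interpreted as $f$; two logics are different iff at least one of these truth functions differs. A valuation is a map $\nu$ from formulas to $V$ with $\nu(\bot)=f$, $\nu(\neg A)=\neg^M(\nu(A))$, $\nu(A\wedge B)=\wedge^M(\nu(A),\nu(B))$, and similarly for $\vee,\to$ (values on propositional variables are arbitrary). The designated values are $t$ and $b$: $\Gamma\models A$ iff for every valuation $\nu$, either $\nu(A')=f$ for some $A'\in\Gamma$ or $\nu(A)\in\{t,b\}$. The logic is paraconsistent if there are formulas $A,B$ with $\{A,\neg A\}\not\models B$. Its logical equivalence relation is: $A\equiv B$ iff $\nu(A)=\nu(B)$ for every valuation $\nu$. Property (a): for every set of formulas $\Gamma$ and formula $A$, $\Gamma\models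 A$ implies $\Gamma\models_{\mathrm{CPL}}A$, where $\models_{\mathrm{CPL}}$ is the consequence relation of classical propositional logic (with $\bot$ false, $\to$ material implication). Property (b): for all sets $\Gamma$ and formulas $A,B,C$: (b1) $\Gamma\cup\{A\}\models B$ iff $\Gamma\models A\to B$; (b2) $\Gamma\models A\wedge B$ iff $\Gamma\models A$ and $\Gamma\models B$; (b3) $\Gamma\cup\{A\vee B\}\models C$ iff $\Gamma\cup\{A\}\models C$ and $\Gamma\cup\{B\}\models C$. *)

(* Defs.v *)
From HB Require Import structures.
From mathcomp Require Import all_boot.
Set Implicit Arguments. Unset Strict Implicit. Unset Printing Implicit Defensive.

Inductive V := vt | vf | vb.

Definition V_code (x : V) : 'I_3 :=
  match x with vt => inord 0 | vf => inord 1 | vb => inord 2 end.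
Definition V_decode (i : 'I_3) : V :=
  match val i with 0 => vt | 1 => vf | _ => vb end.
Lemma V_codeK : cancel V_code V_decode.
Proof. by case; rewrite /V_decode /= inordK. Qed.
HB.instance Definition _ := Finite.copy V (can_type V_codeK).

Inductive form :=
| Var of nat
| Bot
| Neg of form
| And of form & form
| Or  of form & form
| Imp of form & form.

Definition Top : form := Neg Bot.

(* A three-valued logic: truth functions for neg, and, or, imp
   (two logics are equal iff all four truth functions coincide). *)
Definition logic : finType :=
  ({ffun V -> V} * {ffun V * V -> V} * {ffun V * V -> V} * {ffun V * V -> V})%type.

Definition negM (L : logic) := L.1.1.1.
Definition andM (L : logic) := L.1.1.2.
Definition orM  (L : logic) := L.1.2.
Definition impM (L : logic) := L.2.

Definition classical_on_tf (L : logic) : Prop :=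
  [/\ negM L vt = vf, negM L vf = vt,
      [/\ andM L (vt, vt) = vt, andM L (vt, vf) = vf,
          andM L (vf, vt) = vf & andM L (vf, vf) = vf],
      [/\ orM L (vt, vt) = vt, orM L (vt, vf) = vt,
          orM L (vf, vt) = vt & orM L (vf, vf) = vf] &
      [/\ impM L (vt, vt) = vt, impM L (vt, vf) = vf,
          impM L (vf, vt) = vt & impM L (vf, vf) = vt]].

Definition valuation (L : logic) (nu : form -> V) : Prop :=
  [/\ nu Bot = vf,
      forall A, nu (Neg A) = negM L (nu A),
      forall A B, nu (And A B) = andM L (nu A, nu B),
      forall A B, nu (Or A B) = orM L (nu A, nu B) &
      forall A B, nu (Imp A B) = impM L (nu A, nu B)].

Definition designated (x : V) : Prop := x = vt \/ x = vb.

Definition cons (L : logic) (G : form -> Prop) (A : form) : Prop :=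
  forall nu, valuation L nu ->
    (exists A', G A' /\ nu A' = vf) \/ designated (nu A).

Definition paraconsistent (L : logic) : Prop :=
  exists A B, ~ cons L (fun C => C = A \/ C = Neg A) B.

Definition cvaluation (w : form -> bool) : Prop :=
  [/\ w Bot = false,
      forall A, w (Neg A) = ~~ w A,
      forall A B, w (And A B) = w A && w B,
      forall A B, w (Or A B) = w A || w B &
      forall A B, w (Imp A B) = w A ==> w B].

Definition cpl_cons (G : form -> Prop) (A : form) : Prop :=
  forall w, cvaluation w -> (forall A', G A' -> w A' = true) -> w A = true.

Definition setU1 (G : form -> Prop) (A : form) : form -> Prop :=
  fun C => G C \/ C = A.

Definition property_a (L : logic) : Prop :=
  forall G A, cons L G A -> cpl_cons G A.

Definition property_b (L : logic) : Prop :=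
  [/\ forall G A B, cons L (setU1 G A) B <-> cons L G (Imp A B),
      forall G A B, cons L G (And A B) <-> cons L G A /\ cons L G B &
      forall G A B C, cons L (setU1 G (Or A B)) C <->
                      cons L (setU1 G A) C /\ cons L (setU1 G B) C].

Definition equiv (L : logic) (A B : form) : Prop :=
  forall nu, valuation L nu -> nu A = nu B.

Definition lattice_laws (L : logic) : Prop :=
  forall A B,
  [/\ equiv L (And A Bot) Bot, equiv L (Or A Top) Top,
      equiv L (And A Top) A, equiv L (Or A Bot) A &
      [/\ equiv L (And A A) A, equiv L (Or A A) A,
          equiv L (And A B) (And B A) & equiv L (Or A B) (Or B A)]].

Definition in_class (L : logic) : Prop :=
  [/\ classical_on_tf L, paraconsistent L, property_a L, property_b L
    & lattice_laws L].

(* Main.v *)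
Require Import Defs.
From mathcomp Require Import all_boot.
Set Implicit Arguments. Unset Strict Implicit. Unset Printing Implicit Defensive.

Definition dv (b : bool) := if b then vt else vb.
Definition mkneg n : {ffun V -> V} :=
  [ffun x => match x with vt => vf | vf => vt | vb => dv n end].
Definition mkand : {ffun V * V -> V} :=
  [ffun p : V * V => match p with (vf, _) => vf | (_, vf) => vf
                      | (vt, vt) => vt | _ => vb end].
Definition mkor : {ffun V * V -> V} :=
  [ffun p : V * V => match p with (vt, _) => vt | (_, vt) => vt
                      | (vf, vf) => vf | _ => vb end].
Definition mkimp i1 i2 i3 i4 : {ffun V * V -> V} :=
  [ffun p : V * V => match p with
   | (vf, vb) => dv i1 | (vt, vb) => dv i2 | (vb, vt) => dv i3 | (vb, vb) => dv i4
   | (vt, vf) => vf | (vb, vf) => vf | _ => vt end].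

Definition bits := (bool * bool * bool * bool * bool)%type.
Definition mk (b : bits) : logic :=
  let: (n, i1, i2, i3, i4) := b in (mkneg n, mkand, mkor, mkimp i1 i2 i3 i4).
Definition Vb (x y : V) := match x, y with vt,vt|vf,vf|vb,vb => true | _,_ => false end.
Lemma VE x y : (x == y) = Vb x y.
Proof. by case: x; case: y; rewrite ?eqxx //; apply/eqP. Qed.
Ltac unf := unfold negM, andM, orM, impM, mkneg, mkand, mkor, mkimp; rewrite /= ?ffunE; unfold dv; rewrite ?VE /=.

Definition dec (L : logic) : bits :=
  (negM L vb == vt, impM L (vf, vb) == vt, impM L (vt, vb) == vt,
   impM L (vb, vt) == vt, impM L (vb, vb) == vt).

Lemma dec_mk : cancel mk dec.
Proof. by case=> [[[[[] []] []] []] []]; rewrite /dec; unf. Qed.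

Fixpoint eval (L : logic) (m : nat -> V) (A : form) : V :=
  match A with
  | Var n => m n
  | Bot => vf
  | Neg A => negM L (eval L m A)
  | And A B => andM L (eval L m A, eval L m B)
  | Or A B => orM L (eval L m A, eval L m B)
  | Imp A B => impM L (eval L m A, eval L m B)
  end.

Lemma eval_val L m : valuation L (eval L m).
Proof. by split. Qed.

Definition des (x : V) : bool := if x is vf then false else true.

Lemma designatedE x : designated x <-> des x.
Proof. by case: x; rewrite /designated /des; split=> //; intuition. Qed.

Lemma desF x : des x = false -> x = vf.
Proof. by case: x. Qed.

Lemma consE L G A : Defs.cons L G A <->
  forall nu, valuation L nu -> (exists A', G A' /\ nu A' = vf) \/ des (nu A).
Proof.
split=> H nu Hn; case: (H nu Hn) => [h|h]; (try by left);
  by right; apply/designatedE.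
Qed.

Lemma cons_mem L G A : G A -> Defs.cons L G A.
Proof.
move=> GA; apply/consE => nu _; case E: (nu A); try by right.
by left; exists A; split.
Qed.

Lemma tf_a L : classical_on_tf L -> property_a L.
Proof.
case=> n1 n2 [a1 a2 a3 a4] [o1 o2 o3 o4] [i1 i2 i3 i4] G A H w [wB wN wA wO wI] HG.
pose nu X := if w X then vt else vf.
have Hv : valuation L nu.
  split; rewrite /nu.
  - by rewrite wB.
  - by move=> X; rewrite wN; case: (w X).
  - by move=> X Y; rewrite wA; case: (w X); case: (w Y).
  - by move=> X Y; rewrite wO; case: (w X); case: (w Y).
  - by move=> X Y; rewrite wI; case: (w X); case: (w Y).
case: (H nu Hv) => [[A' [GA' E]]|].
  by move: E; rewrite /nu HG.
by rewrite /nu /designated; case: (w A) => // -[].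
Qed.

Lemma tab_b L :
  (forall x y, des (impM L (x, y)) = des x ==> des y) ->
  (forall x y, des (andM L (x, y)) = des x && des y) ->
  (forall x y, des (orM L (x, y)) = des x || des y) ->
  property_b L.
Proof.
move=> hI hA hO; split.
- move=> G A B; split=> /consE H; apply/consE => nu Hn; have [hB hN hA' hO' hI'] := Hn.
  + case: (H nu Hn) => [[A' [[GA'|->] E]]|h].
    * by left; exists A'.
    * by right; rewrite hI' hI E.
    * by right; rewrite hI' hI h implybT.
  + case: (H nu Hn) => [[A' [GA' E]]|h].
    * by left; exists A'; split=> //; left.
    * rewrite hI' hI in h; case E: (des (nu A)) h => /= h; first by right.
      by left; exists A; split; [right|apply: desF].
- move=> G A B; split.
  + move/consE=> H; split; apply/consE=> nu Hn; have [hB hN hA' hO' hI'] := Hn;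
      (case: (H nu Hn) => [h|]; [by left|]); rewrite hA' hA => /andP[? ?]; by right.
  + case=> /consE H1 /consE H2; apply/consE=> nu Hn; have [hB hN hA' hO' hI'] := Hn.
    case: (H1 nu Hn) => [h|h1]; first by left.
    case: (H2 nu Hn) => [h|h2]; first by left.
    by right; rewrite hA' hA h1 h2.
- move=> G A B C; split.
  + move/consE=> H; split; apply/consE=> nu Hn; have [hB hN hA' hO' hI'] := Hn;
      (case: (H nu Hn) => [[A' [[GA'|->] E]]|h]; [by left; exists A'; split=> //; left| |by right]);
      move: E; rewrite hO' => /(congr1 des); rewrite hO /= => /norP[/negbTE/desF ? /negbTE/desF ?];
      by left; eexists; split; [right; reflexivity|].
  + case=> /consE H1 /consE H2; apply/consE=> nu Hn; have [hB hN hA' hO' hI'] := Hn.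
    case: (H1 nu Hn) => [[A' [[GA'|->] E1]]|h]; [by left; exists A'; split=> //; left| |by right].
    case: (H2 nu Hn) => [[B' [[GB'|->] E2]]|h]; [by left; exists B'; split=> //; left| |by right].
    by left; exists (Or A B); split; [right|apply: desF; rewrite hO' hO E1 E2].
Qed.

Lemma mk_in b : in_class (mk b).
Proof.
case: b => [[[[n i1] i2] i3] i4].
have cl : classical_on_tf (mk (n, i1, i2, i3, i4)).
  by split; unf.
split=> //.
- exists (Var 0), (Var 1) => H.
  pose m k := if k is 0 then vb else vf.
  case: (H (eval _ m) (eval_val _ _)) => [[A' [[->|->] E]]|].
  + by [].
  + by move: E; unf; case: (n).
  + by rewrite /designated /=; case.
- exact: tf_a.
- apply: tab_b => x y; unf;
    by clear cl; case: x; case: y; case: i1; case: i2; case: i3; case: i4.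
- move=> A B; split; [| | | |split]; move=> nu [hB hN hA hO hI];
    rewrite /Top ?hA ?hO ?hN ?hB; unf;
    by case: (nu A); case: (nu B).
Qed.

Lemma in_mk L : in_class L -> L = mk (dec L).
Proof.
case=> cl par _ [hb1 _ _] lat.
have [n1 n2 [a1 a2 a3 a4] [o1 o2 o3 o4] [i1 i2 i3 i4]] := cl.
have nb : negM L vb <> vf.
  move=> E; case: par => A [B []] nu [hB hN hA hO hI]; left.
  case E': (nu A).
  - by exists (Neg A); split; [right|rewrite hN E'].
  - by exists A; split; [left|].
  - by exists (Neg A); split; [right|rewrite hN E'].
pose m (x y : V) k := if k is 0 then x else y.
have l1 x y := let: And5 e _ _ _ _ := lat (Var 0) (Var 1) in e (eval L (m x y)) (eval_val _ _).
have l2 x y := let: And5 _ e _ _ _ := lat (Var 0) (Var 1) in e (eval L (m x y)) (eval_val _ _).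
have l3 x y := let: And5 _ _ e _ _ := lat (Var 0) (Var 1) in e (eval L (m x y)) (eval_val _ _).
have l4 x y := let: And5 _ _ _ e _ := lat (Var 0) (Var 1) in e (eval L (m x y)) (eval_val _ _).
have l5 x y := let: And5 _ _ _ _ (And4 e _ _ _) := lat (Var 0) (Var 1) in e (eval L (m x y)) (eval_val _ _).
have l6 x y := let: And5 _ _ _ _ (And4 _ e _ _) := lat (Var 0) (Var 1) in e (eval L (m x y)) (eval_val _ _).
have l7 x y := let: And5 _ _ _ _ (And4 _ _ e _) := lat (Var 0) (Var 1) in e (eval L (m x y)) (eval_val _ _).
have l8 x y := let: And5 _ _ _ _ (And4 _ _ _ e) := lat (Var 0) (Var 1) in e (eval L (m x y)) (eval_val _ _).
simpl in l1, l2, l3, l4, l5, l6, l7, l8.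
rewrite /Top /= n2 in l2 l3.
have e1 := l1 vb vb; have e2 := l2 vb vb; have e3 := l3 vb vb; have e4 := l4 vb vb.
have e5 := l5 vb vb; have e6 := l6 vb vb; have e7 := l7 vb vt; have e8 := l8 vb vt.
have e7' := l7 vb vf; have e8' := l8 vb vf.
rewrite e3 in e7; rewrite e4 in e8'; rewrite e1 in e7'; rewrite e2 in e8.
have ev (G : form -> Prop) A x : (forall C, G C -> C = Var 0) -> x <> vf ->
    Defs.cons L G A -> des (eval L (m x x) A).
  move=> hG hx /consE H; case: (H _ (eval_val L (m x x))) => // -[C [/hG -> /= E]].
  by [].
have f1 : des (impM L (vf, vb)).
  have := ev (fun _ => False) (Imp Bot (Var 0)) vb (fun _ => False_ind _) (fun e => ltac:(discriminate)).
  apply; apply/hb1/consE => nu0 [hB _ _ _ _]; left; exists Bot; split=> //; by right.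
have f2 : des (impM L (vt, vb)).
  have := ev (fun C => C = Var 0) (Imp Top (Var 0)) vb (fun _ h => h) (fun e => ltac:(discriminate)).
  rewrite /= n2; apply; apply/hb1/cons_mem; by left.
have f3 : des (impM L (vb, vt)).
  have := ev (fun _ => False) (Imp (Var 0) Top) vb (fun _ => False_ind _) (fun e => ltac:(discriminate)).
  rewrite /= n2; apply; apply/hb1/consE => nu0 [hB hN _ _ _]; right; by rewrite /Top hN hB n2.
have f4 : des (impM L (vb, vb)).
  have := ev (fun _ => False) (Imp (Var 0) (Var 0)) vb (fun _ => False_ind _) (fun e => ltac:(discriminate)).
  apply; apply/hb1/cons_mem; by right.
have f5 : impM L (vb, vf) = vf.
  apply: desF; apply/negP => hd.
  have : Defs.cons L (fun C => C = Var 0 \/ C = Neg (Var 0)) (Imp (Var 0) Bot).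
    apply/consE => nu0 [hB hN _ _ hI].
    case E: (nu0 (Var 0)).
    - by left; exists (Neg (Var 0)); split; [right|rewrite hN E].
    - by left; exists (Var 0); split; [left|].
    - by right; rewrite hI E hB.
  move/(hb1 (fun C => C = Var 0 \/ C = Neg (Var 0)) (Var 0) Bot)/consE/(_ _ (eval_val L (m vb vb))) => [[C [HC E]]|//].
  case: HC => [HC|HC]; first case: HC => HC; move: E; rewrite HC /= //.
move: nb f1 f2 f3 f4 f5 e1 e2 e3 e4 e5 e6 e7 e8 e7' e8' n1 n2 a1 a2 a3 a4 o1 o2 o3 o4 i1 i2 i3 i4.
clear.
case: L => [[[ng an] orr] im]; rewrite /dec /negM /andM /orM /impM /=.
move=> nb f1 f2 f3 f4 f5 e1 e2 e3 e4 e5 e6 e7 e8 e7' e8' n1 n2 a1 a2 a3 a4 o1 o2 o3 o4 i1 i2 i3 i4.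
move: e7 e8 e7' e8' => /esym e7 /esym e8 /esym e7' /esym e8'.
congr (_, _, _, _); apply/ffunP.
- case; rewrite /mkneg ffunE /dv ?VE //=; move: nb; case: (ng vb) => //.
- case=> [[] []]; rewrite /mkand ffunE /=; by rewrite ?(a1, a2, a3, a4, e1, e3, e5, e7, e7').
- case=> [[] []]; rewrite /mkor ffunE /=; by rewrite ?(o1, o2, o3, o4, e2, e4, e6, e8, e8').
- case=> [[] []]; rewrite /mkimp ffunE /dv ?VE /=; rewrite ?(i1, i2, i3, i4, f5) //.
  + by move: f2; case: (im (vt, vb)).
  + by move: f1; case: (im (vf, vb)).
  + by move: f3; case: (im (vb, vt)).
  + by move: f4; case: (im (vb, vb)).
Qed.

Theorem corollary2 :
  exists s : seq logic,
    [/\ uniq s, size s = 32 & forall L : logic, in_class L <-> L \in s].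
Proof.
exists (map mk (enum {: bits})); split.
- by rewrite map_inj_uniq ?enum_uniq //; apply: can_inj dec_mk.
- by rewrite size_map -cardE !card_prod card_bool.
- move=> L; split.
  + by move/in_mk => ->; apply: map_f; rewrite mem_enum.
  + by case/mapP=> b _ ->; apply: mk_in.
Qed.
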